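(* Let $N\ge1$, $m=2$, $d=1$, and for every $t=1,\dots,N$ let $m_t=3$, $(q^{(t)}_1,q^{(t)}_2,q^{(t)}_3)=(0,1/2,3/2)$ and $\boldsymbol a^{(t)}=(1/3,1/3,1/3)$. Consider the point $X=(0,1)$, $\boldsymbol w=(1/3,2/3)$, and for all $t$, $\Pi^{(t)}$ with first row $(1/3,0,0)$ and second row $(0,1/3,1/3)$. Then: (i) with $X$ fixed, $(\boldsymbol w,\Pi^{(1)},\dots,\Pi^{(N)})$ is an optimal solution of the resulting linear program; (ii) with $(\boldsymbol w,\Pi^{(1)},\dots,\Pi^{(N)})$ fixed, $X$ minimizes the objective over $X\in\mathbb{R}^2$; (iii) nevertheless, this point is not a local minimum of the free support problem, and for every $\delta\in(0,1/2)$ there is a feasible point with $X=(\delta,1)$ and strictly smaller objective value.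
   Context: Free support problem: given discrete measures with support points $q^{(t)}_j\in\mathbb{R}^d$ and weights $\boldsymbol a^{(t)}\in\mathbb{R}^{m_t}$ (nonnegative, summing to 1), $t=1,\dots,N$, minimize $\sum_{t=1}^N\sum_{i=1}^m\sum_{j=1}^{m_t}\pi^{(t)}_{ij}\|\boldsymbol x_i-\boldsymbol q^{(t)}_j\|^2$ over $X=(\boldsymbol x_1,\dots,\boldsymbol x_m)\in(\mathbb{R}^d)^m$, $\boldsymbol w\in\mathbb{R}^m$ and $\Pi^{(t)}=[\pi^{(t)}_{ij}]\in\mathbb{R}^{m\times m_t}$, subject to $\boldsymbol w\ge0$, $\boldsymbol 1_m^{\top}\boldsymbol w=1$, $\Pi^{(t)}\ge0$, $\Pi^{(t)}\boldsymbol 1_{m_t}=\boldsymbol w$, $(\Pi^{(t)})^{\top}\boldsymbol 1_m=\boldsymbol a^{(t)}$ for all $t$. For fixed $X$ this is a linear program in $(\boldsymbol w,\Pi^{(1)},\dots,\Pi^{(N)})$. A local minimum means a feasible point whose objective value is no larger than that of every feasible point in some neighborhood of it (in the joint variables). *)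

(* Defs.v *)
From Stdlib Require Import Reals Lra Lia.
Open Scope R_scope.

Fixpoint sumR (n : nat) (f : nat -> R) : R :=
  match n with
  | O => 0
  | S k => sumR k f + f k
  end.

(* Data of the example: m = 2, d = 1, m_t = 3 for all t (indices from 0). *)
Definition m_sz : nat := 2.
Definition mt_sz : nat := 3.

Definition q (t j : nat) : R :=
  match j with
  | O => 0
  | S O => 1/2
  | _ => 3/2
  end.

Definition a (t j : nat) : R := 1/3.

(* Variables: X : nat -> R (x_i, i < 2), w : nat -> R (i < 2),
   P : nat -> nat -> nat -> R, P t i j = pi^(t)_{ij} (t < N, i < 2, j < 3). *)

Definition objective (N : nat) (X : nat -> R) (P : nat -> nat -> nat -> R) : R :=
  sumR N (fun t => sumR m_sz (fun i => sumR mt_sz (fun j =>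
    P t i j * (X i - q t j) ^ 2))).

Definition feasible (N : nat) (w : nat -> R) (P : nat -> nat -> nat -> R) : Prop :=
  (forall i, (i < m_sz)%nat -> 0 <= w i) /\
  sumR m_sz w = 1 /\
  (forall t i j, (t < N)%nat -> (i < m_sz)%nat -> (j < mt_sz)%nat -> 0 <= P t i j) /\
  (forall t i, (t < N)%nat -> (i < m_sz)%nat -> sumR mt_sz (fun j => P t i j) = w i) /\
  (forall t j, (t < N)%nat -> (j < mt_sz)%nat -> sumR m_sz (fun i => P t i j) = a t j).

(* (X', w', P') lies in the open max-norm ball of radius eps around (X, w, P),
   only the relevant coordinates being considered. *)
Definition near (N : nat) (eps : R) (X w : nat -> R) (P : nat -> nat -> nat -> R)
    (X' w' : nat -> R) (P' : nat -> nat -> nat -> R) : Prop :=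
  (forall i, (i < m_sz)%nat -> Rabs (X' i - X i) < eps) /\
  (forall i, (i < m_sz)%nat -> Rabs (w' i - w i) < eps) /\
  (forall t i j, (t < N)%nat -> (i < m_sz)%nat -> (j < mt_sz)%nat ->
     Rabs (P' t i j - P t i j) < eps).

Definition local_min (N : nat) (X w : nat -> R) (P : nat -> nat -> nat -> R) : Prop :=
  feasible N w P /\
  exists eps, 0 < eps /\
    forall X' w' P', feasible N w' P' -> near N eps X w P X' w' P' ->
      objective N X P <= objective N X' P'.

Definition X0 (i : nat) : R := match i with O => 0 | _ => 1 end.
Definition w0 (i : nat) : R := match i with O => 1/3 | _ => 2/3 end.
Definition P0 (t i j : nat) : R :=
  match i, j with
  | O, O => 1/3
  | O, _ => 0
  | _, O => 0
  | _, _ => 1/3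
  end.
Definition Xdelta (delta : R) (i : nat) : R := match i with O => delta | _ => 1 end.

(* Main.v *)
Require Import Defs.
From Stdlib Require Import Reals Lra Lia Psatz.
Open Scope R_scope.

Lemma sum_le N f g : (forall t, (t<N)%nat -> f t <= g t) -> sumR N f <= sumR N g.
Proof.
  induction N; intros H; simpl. lra.
  assert (sumR N f <= sumR N g) by (apply IHN; intros; apply H; lia).
  assert (f N <= g N) by (apply H; lia). lra.
Qed.

Lemma sum_lt N f g : (1<=N)%nat -> (forall t, (t<N)%nat -> f t < g t) -> sumR N f < sumR N g.
Proof.
  destruct N as [|N]; intros HN H. lia. simpl.
  assert (sumR N f <= sumR N g) by (apply sum_le; intros; apply Rlt_le, H; lia).
  assert (f N < g N) by (apply H; lia). lra.
Qed.

Theorem mainTheorem8 (N : nat) (HN : (1 <= N)%nat) :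
  (* (i) (w0, P0) is optimal for the LP with X = X0 fixed *)
  (feasible N w0 P0 /\
   forall w P, feasible N w P -> objective N X0 P0 <= objective N X0 P) /\
  (* (ii) X0 minimizes the objective with (w0, P0) fixed *)
  (forall X, objective N X0 P0 <= objective N X P0) /\
  (* (iii) not a local minimum, with explicit improving points *)
  (~ local_min N X0 w0 P0 /\
   forall delta, 0 < delta < 1/2 ->
     exists w P, feasible N w P /\ objective N (Xdelta delta) P < objective N X0 P0).
Proof.
  split; [split|split; [|split]].
  - unfold feasible, m_sz, mt_sz. repeat split.
    + intros i Hi. destruct i as [|[|]]; unfold w0; lra.
    + simpl. unfold w0. lra.
    + intros t i j _ Hi Hj. destruct i as [|[|]]; destruct j as [|[|[|]]]; unfold P0; lra.
    + intros t i _ Hi. destruct i as [|[|]]; simpl; unfold P0, w0; try lra; lia.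
    + intros t j _ Hj. destruct j as [|[|[|]]]; simpl; unfold P0, a; try lra; lia.
  - intros w P [_ [_ [Hp [_ Hc]]]]. unfold objective. apply sum_le. intros t Ht.
    unfold m_sz, mt_sz in *. simpl. unfold X0, P0, q.
    pose proof (Hp t 0%nat 0%nat Ht ltac:(lia) ltac:(lia)).
    pose proof (Hp t 0%nat 1%nat Ht ltac:(lia) ltac:(lia)).
    pose proof (Hp t 0%nat 2%nat Ht ltac:(lia) ltac:(lia)).
    pose proof (Hp t 1%nat 0%nat Ht ltac:(lia) ltac:(lia)).
    pose proof (Hp t 1%nat 1%nat Ht ltac:(lia) ltac:(lia)).
    pose proof (Hp t 1%nat 2%nat Ht ltac:(lia) ltac:(lia)).
    pose proof (Hc t 0%nat Ht ltac:(lia)).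
    pose proof (Hc t 1%nat Ht ltac:(lia)).
    pose proof (Hc t 2%nat Ht ltac:(lia)).
    simpl in *. unfold a in *. nra.
  - intros X. unfold objective. apply sum_le. intros t Ht.
    unfold m_sz, mt_sz. simpl. unfold X0, P0, q. pose proof (pow2_ge_0 (X 0%nat)). pose proof (pow2_ge_0 (X 1%nat - 1)). nra.
  - intros [_ [eps [Heps H]]].
      set (s := Rmin (eps/2) (1/4)).
      assert (Hs1 : 0 < s) by (unfold s; apply Rmin_glb_lt; lra).
      assert (Hs2 : s <= 1/4) by (unfold s; apply Rmin_r).
      assert (Hs3 : s <= eps/2) by (unfold s; apply Rmin_l).
      specialize (H (Xdelta s) (fun i => match i with O => 1/3 + s | _ => 2/3 - s end)
        (fun t i j => match i, j with
          | O, O => 1/3 | O, S O => s | O, _ => 0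
          | _, O => 0 | _, S O => 1/3 - s | _, _ => 1/3 end)).
      assert (Hf : feasible N (fun i => match i with O => 1/3 + s | _ => 2/3 - s end)
        (fun t i j => match i, j with
          | O, O => 1/3 | O, S O => s | O, _ => 0
          | _, O => 0 | _, S O => 1/3 - s | _, _ => 1/3 end)).
      { unfold feasible, m_sz, mt_sz. repeat split.
        + intros i Hi. destruct i as [|[|]]; lra.
        + simpl. lra.
        + intros t i j _ Hi Hj. destruct i as [|[|]]; destruct j as [|[|[|]]]; lra.
        + intros t i _ Hi. destruct i as [|[|]]; simpl; try lra; lia.
        + intros t j _ Hj. destruct j as [|[|[|]]]; simpl; unfold a; try lra; lia. }
      assert (Hn : near N eps X0 w0 P0 (Xdelta s)
        (fun i => match i with O => 1/3 + s | _ => 2/3 - s end)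
        (fun t i j => match i, j with
          | O, O => 1/3 | O, S O => s | O, _ => 0
          | _, O => 0 | _, S O => 1/3 - s | _, _ => 1/3 end)).
      { unfold near, m_sz, mt_sz. repeat split.
        + intros i Hi. destruct i as [|[|]]; unfold Xdelta, X0; apply Rabs_def1; lra.
        + intros i Hi. destruct i as [|[|]]; unfold w0; apply Rabs_def1; lra.
        + intros t i j _ Hi Hj. destruct i as [|[|]]; destruct j as [|[|[|]]]; unfold P0;
            apply Rabs_def1; lra. }
      specialize (H Hf Hn). revert H. apply Rlt_not_le.
      unfold objective. apply sum_lt; auto. intros t Ht.
      unfold m_sz, mt_sz. simpl. unfold X0, P0, q, Xdelta.
      assert (0 < s*s*(2/3 - s)) by (apply Rmult_lt_0_compat; [nra|lra]). nra.
  - intros delta Hd.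
      exists (fun i => match i with O => 2/3 | _ => 1/3 end).
      exists (fun t i j => match i, j with
          | O, O => 1/3 | O, S O => 1/3 | O, _ => 0
          | _, O => 0 | _, S O => 0 | _, _ => 1/3 end).
      split.
      * unfold feasible, m_sz, mt_sz. repeat split.
        -- intros i Hi. destruct i as [|[|]]; lra.
        -- simpl. lra.
        -- intros t i j _ Hi Hj. destruct i as [|[|]]; destruct j as [|[|[|]]]; lra.
        -- intros t i _ Hi. destruct i as [|[|]]; simpl; try lra; lia.
        -- intros t j _ Hj. destruct j as [|[|[|]]]; simpl; unfold a; try lra; lia.
      * unfold objective. apply sum_lt; auto. intros t Ht.
        unfold m_sz, mt_sz. simpl. unfold X0, P0, q, Xdelta. nra.
Qed.
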